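(* Let $n>3$ be odd. Let $H_n$ be the bipartite graph with vertex classes $A=\{a_0,\dots,a_{n-1}\}$ and $B=\{b_0,\dots,b_{n-1}\}$ whose edge set is $M_0\cup M_1\cup M_2$, where $M_j=\{a_ib_{i+j}: 0\le i\le n-1\}$ with indices modulo $n$. Then $H_n$ is $3$-regular, for any two distinct $j,j'\in\{0,1,2\}$ the graph $M_j\cup M_{j'}$ is a Hamilton cycle of $H_n$, and $m(H_n)=4$.
   Context: All graphs are finite and simple. For graphs $G_1=(V,E_1)$, $G_2=(V,E_2)$, their symmetric difference is $(V,E_1\oplus E_2)$, where $E_1\oplus E_2$ is the set of edges in exactly one of $E_1,E_2$. A connectivity code for $H=(V,E)$ is a collection of distinct spanning subgraphs $(V,E')$, $E'\subseteq E$, such that the symmetric difference of any two distinct members is a connected graph on $V$; $m(H)$ is the maximum cardinality of a connectivity code for $H$. *)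

(* Defs.v *)
From mathcomp Require Import all_boot.
Set Implicit Arguments. Unset Strict Implicit. Unset Printing Implicit Defensive.

(* A simple graph on a finite vertex type V is given by its edge set
   E : {set {set V}}, every edge being a 2-element subset of V.
   Spanning subgraphs (V, E') are identified with their edge sets E'. *)

Section Graphs.
Variable V : finType.

Definition adj (E : {set {set V}}) : rel V := fun x y => [set x; y] \in E.

Definition deg (E : {set {set V}}) (v : V) : nat := #|[set e in E | v \in e]|.

Definition regular (k : nat) (E : {set {set V}}) : bool :=
  [forall v : V, deg E v == k].

Definition connectedb (E : {set {set V}}) : bool :=
  [forall u : V, forall v : V, connect (adj E) u v].

Definition symdiff (E1 E2 : {set {set V}}) : {set {set V}} :=
  (E1 :\: E2) :|: (E2 :\: E1).

Definition is_conn_code (E : {set {set V}}) (C : {set {set {set V}}}) : bool :=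
  [forall F in C, F \subset E] &&
  [forall F1 in C, forall F2 in C, (F1 != F2) ==> connectedb (symdiff F1 F2)].

Definition m_code (E : {set {set V}}) : nat :=
  \max_(C : {set {set {set V}}} | is_conn_code E C) #|C|.

Definition hamilton_cycle (E F : {set {set V}}) : Prop :=
  F \subset E /\
  exists s : seq V, [/\ uniq s, forall v : V, v \in s, 3 <= size s &
    F = [set [set x; next s x] | x in s]].

End Graphs.

Definition ord_addn (n : nat) (i : 'I_n) (j : nat) : 'I_n :=
  Ordinal (ltn_pmod (i + j) (leq_ltn_trans (leq0n i) (ltn_ord i))).

(* vertices of H_n: inl i = a_i, inr i = b_i *)
Definition HV (n : nat) : finType := ('I_n + 'I_n)%type.

Definition Mj (n j : nat) : {set {set HV n}} :=
  [set [set (inl i : HV n); inr (ord_addn i j)] | i : 'I_n].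

Definition HE (n : nat) : {set {set HV n}} := Mj n 0 :|: Mj n 1 :|: Mj n 2.

(* Main.v *)
Require Import Defs.
From mathcomp Require Import all_boot zify.
Set Implicit Arguments. Unset Strict Implicit. Unset Printing Implicit Defensive.



Section Gen.
Variable V : finType.
Implicit Types E F G : {set {set V}}.

Lemma adj_sym E : symmetric (adj E).
Proof. by move=> x y; rewrite /adj setUC. Qed.

Lemma conn_card E : connectedb E -> #|V| <= (#|E|).+1.
Proof.
move=> /forallP cE.
case: (pickP (@predT V)) => [r _|h]; last first.
  by rewrite (eq_card0 (A:=V)) // => x; rewrite /= h.
pose dP v k := [exists t : k.-tuple V, path (adj E) v t && (last v t == r)].
have exP v : exists k, dP v k.
  have /connectP [p pp lp] := forallP (cE v) r.
  exists (size p); apply/existsP; exists (in_tuple p) => /=.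
  by rewrite pp -lp eqxx.
pose d v := ex_minn (exP v).
have key v : v != r -> exists w, adj E v w && (d w < d v).
  move=> vr; rewrite /d; case: ex_minnP => k /existsP [t /andP [pt lt]] mk.
  case: t pt lt => /= p sp pt lt.
  case: p sp pt lt => [|w p'] sp /=.
    by move=> _ /eqP lt; rewrite lt eqxx in vr.
  move=> /andP [vw pw] lw; exists w; rewrite vw /=.
  case: ex_minnP => k' _ mk'.
  have : dP w (size p').
    apply/existsP; exists (in_tuple p') => /=; by rewrite pw lw.
  move=> /mk' h; apply: leq_ltn_trans h _; by rewrite -(eqP sp).
pose f v := [set v; odflt v [pick w | adj E v w && (d w < d v)]].
have fP v : v != r -> exists2 w, f v = [set v; w] & adj E v w && (d w < d v).
  move=> vr; rewrite /f; case: pickP => [w hw|h] /=; first by exists w.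
  by case: (key v vr) => w hw; rewrite h in hw.
have sub : f @: (setT :\ r) \subset E.
  apply/subsetP => e /imsetP [v]; rewrite !inE andbT => vr ->.
  by case: (fP v vr) => w -> /andP [].
have inj : {in setT :\ r &, injective f}.
  move=> v v'; rewrite !inE !andbT => vr v'r.
  case: (fP v vr) => w -> /andP [_ dw].
  case: (fP v' v'r) => w' -> /andP [_ dw'] eq.
  apply/eqP; apply/negP => /negP vv.
  have h1 : v \in [set v'; w'] by rewrite -eq !inE eqxx.
  have h2 : v' \in [set v; w] by rewrite eq !inE eqxx.
  move: h1 h2; rewrite !inE (negbTE vv) /= => /eqP e1.
  rewrite eq_sym (negbTE vv) /= => /eqP e2.
  subst; by rewrite ltnNge ltnW in dw'.
have := subset_leq_card sub; rewrite (card_in_imset inj).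
move=> h; rewrite -cardsT (cardsD1 r [set: V]) in_setT add1n ltnS //.

Qed.

Lemma conn_sub F G : F \subset G -> connectedb F -> connectedb G.
Proof.
move=> /subsetP FG /forallP cF; apply/forallP => u; apply/forallP => v.
apply: connect_sub (forallP (cF u) v) => x y hxy.
by apply: connect1; apply: FG.
Qed.

End Gen.

Section Gen.
Variable V : finType.
Implicit Types E F G : {set {set V}}.

Lemma card_sub_sum E (A : {set {set V}}) : A \subset E -> #|A| = \sum_(e in E) (e \in A).
Proof.
move=> /subsetP AE; rewrite -sum1_card big_mkcond [RHS]big_mkcond /=.
apply: eq_bigr => e _; case eA: (e \in A); [by rewrite (AE _ eA)|by case: (e \in E)].
Qed.

Lemma card_symdiff E F1 F2 : F1 \subset E -> F2 \subset E ->
  #|symdiff F1 F2| = \sum_(e in E) ((e \in F1) (+) (e \in F2)).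
Proof.
move=> s1 s2; rewrite (@card_sub_sum E); last first.
  by rewrite /symdiff subUset !(subset_trans (subsetDl _ _)).
apply: eq_bigr => e _; rewrite /symdiff !inE.
by case: (e \in F1); case: (e \in F2).
Qed.

Lemma five_bound E F1 F2 F3 F4 F5 :
  F1 \subset E -> F2 \subset E -> F3 \subset E -> F4 \subset E -> F5 \subset E ->
  #|symdiff F1 F2| + #|symdiff F1 F3| + #|symdiff F2 F3| + #|symdiff F1 F4| +
  #|symdiff F1 F5| + #|symdiff F2 F4| + #|symdiff F2 F5| + #|symdiff F3 F4| +
  #|symdiff F3 F5| + #|symdiff F4 F5| <= 6 * #|E|.
Proof.
move=> s1 s2 s3 s4 s5; rewrite !(@card_symdiff E) // -!big_split /=.
rewrite mulnC -sum_nat_const; apply: leq_sum => e _.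
by case: (e \in F1); case: (e \in F2); case: (e \in F3); case: (e \in F4);
  case: (e \in F5).
Qed.

Lemma tri_even E F1 F2 F3 :
  F1 \subset E -> F2 \subset E -> F3 \subset E ->
  ~~ odd (#|symdiff F1 F2| + #|symdiff F1 F3| + #|symdiff F2 F3|).
Proof.
move=> s1 s2 s3; rewrite !(@card_symdiff E) // -!big_split /=.
elim/big_ind: _ => //; first by move=> x y hx hy; rewrite oddD (negbTE hx) (negbTE hy).
by move=> e _; case: (e \in F1); case: (e \in F2); case: (e \in F3).
Qed.
End Gen.


Section Hn.
Variable n : nat.
Hypothesis n3 : 3 < n.
Hypothesis nodd : odd n.

Lemma npos : 0 < n. Proof. by apply: leq_trans n3. Qed.

Definition Edge (i : 'I_n) (j : nat) : {set HV n} :=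
  [set (inl i : HV n); inr (ord_addn i j)].

Lemma MjE j e : (e \in Mj n j) = [exists i, e == Edge i j].
Proof.
apply/imsetP/existsP => [[i _ ->]|[i /eqP ->]]; by exists i.
Qed.

Lemma Edge_in i j : Edge i j \in Mj n j.
Proof. by rewrite MjE; apply/existsP; exists i. Qed.

Lemma Edge_inj i i' j j' : Edge i j = Edge i' j' ->
  i = i' /\ ord_addn i j = ord_addn i' j'.
Proof.
move=> h.
have h1 : (inl i : HV n) \in Edge i' j' by rewrite -h !inE eqxx.
have h2 : (inr (ord_addn i j) : HV n) \in Edge i' j' by rewrite -h !inE eqxx orbT.
move: h1 h2; rewrite !inE => /orP [/eqP e1|/eqP //] /orP [/eqP //|/eqP e2].
split; [exact: (@inl_inj _ _ _ _ e1) | exact: (@inr_inj _ _ _ _ e2)].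
Qed.

Lemma ord_addn_inj j : injective (fun i : 'I_n => ord_addn i j).
Proof.
move=> i i' /(congr1 val) /= /eqP h; apply/val_inj/eqP.
rewrite eqn_modDr in h.
by rewrite !modn_small in h.
Qed.

Lemma M_disj e a b : a < 3 -> b < 3 -> e \in Mj n a -> e \in Mj n b -> a = b.
Proof.
move=> a3 b3; rewrite !MjE => /existsP [i /eqP ->] /existsP [i' /eqP].
move=> /Edge_inj [<-] /(congr1 val) /= /eqP.
rewrite eqn_modDl !modn_small ?(leq_trans a3 (ltnW n3)) ?(leq_trans b3 (ltnW n3)) //.
by move/eqP.
Qed.


Lemma deg_M j v : deg (Mj n j) v = 1.
Proof.
have [e0 He0] : exists e0, forall e, (e \in Mj n j) && (v \in e) = (e == e0).
  case: v => [i|b].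
    exists (Edge i j) => e; apply/idP/eqP => [/andP []|->]; last first.
      by rewrite Edge_in !inE eqxx.
    rewrite MjE => /existsP [i' /eqP ->]; rewrite !inE => /orP [/eqP e1|/eqP //].
    by rewrite (@inl_inj _ _ _ _ e1).
  pose i := invF (@ord_addn_inj j) b.
  have hi : ord_addn i j = b by rewrite /i (f_invF (@ord_addn_inj j)).
  exists (Edge i j) => e; apply/idP/eqP => [/andP []|->]; last first.
    by rewrite Edge_in !inE hi eqxx orbT.
  rewrite MjE => /existsP [i' /eqP ->]; rewrite !inE => /orP [/eqP //|/eqP e1].
  have e2 := @inr_inj _ _ _ _ e1.
  by rewrite (@ord_addn_inj j i' i) // hi.
rewrite /deg -(cards1 e0); apply: eq_card => e; rewrite !inE; exact: He0.
Qed.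

Lemma deg_U (A B : {set {set HV n}}) v : {in A, forall e, e \notin B} ->
  deg (A :|: B) v = deg A v + deg B v.
Proof.
move=> dAB; rewrite /deg.
have -> : [set e in A :|: B | v \in e] = [set e in A | v \in e] :|: [set e in B | v \in e].
  by apply/setP => e; rewrite !inE andb_orl.
rewrite cardsU.
have -> : [set e in A | v \in e] :&: [set e in B | v \in e] = set0.
  apply/setP => e; rewrite !inE; apply/negP => /andP [/andP [eA _] /andP [eB _]].
  by move: (dAB e eA); rewrite eB.
by rewrite cards0 subn0.
Qed.

Lemma regular_HE : regular 3 (HE n).
Proof.
apply/forallP => v; rewrite /HE.
rewrite deg_U; last first.
  move=> e; rewrite inE => /orP [] h; apply/negP => h'.
    by have := M_disj (a:=0) (b:=2) isT isT h h'.
  by have := M_disj (a:=1) (b:=2) isT isT h h'.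
rewrite deg_U; last first.
  move=> e h; apply/negP => h'.
  by have := M_disj (a:=0) (b:=1) isT isT h h'.
by rewrite !deg_M.
Qed.


Definition om (k : nat) : 'I_n := Ordinal (ltn_pmod k npos).

Lemma cop_cancel d a b : coprime d n -> a < n -> b < n ->
  (a * d) %% n = (b * d) %% n -> a = b.
Proof.
move=> cop; rewrite coprime_sym in cop.
wlog ab : a b / a <= b.
  move=> W an bn h; case: (leqP a b) => [ab|ba]; first exact: W.
  by apply/esym/W => //; apply: ltnW.
move=> an bn /eqP h.
rewrite eq_sym eqn_mod_dvd ?leq_mul2r ?ab ?orbT // -mulnBl Gauss_dvdl // in h.
have : b - a < n by apply: leq_ltn_trans (leq_subr _ _) bn.
case: (posnP (b - a)) => [|p]; first by move/eqP; rewrite subn_eq0 => ba _; apply/eqP; rewrite eqn_leq ab.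
by move=> lt; have := dvdn_leq p h; rewrite leqNgt lt.
Qed.

Section Cyc.
Variables j d : nat.
Hypothesis d0 : 0 < d.
Hypothesis jd : j + d < 3.
Hypothesis cop : coprime d n.

Definition g (k : nat) : HV n :=
  if odd k then inr (ord_addn (om (k./2 * d)) (j + d)) else inl (om (k./2 * d)).

Definition U := Mj n j :|: Mj n (j + d).

Lemma gE0 t : g t.*2 = inl (om (t * d)).
Proof. by rewrite /g odd_double doubleK. Qed.

Lemma gE1 t : g t.*2.+1 = inr (ord_addn (om (t * d)) (j + d)).
Proof.
have h : t.*2.+1./2 = t by exact: (half_bit_double t true).
by rewrite /g h /= odd_double.
Qed.

Lemma addE t : ord_addn (om (t.+1 * d)) j = ord_addn (om (t * d)) (j + d).
Proof.
apply/val_inj => /=; rewrite !modnDml mulSn; congr (_ %% _); lia.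
Qed.

Lemma decomp k : exists t, k = t.*2 \/ k = t.*2.+1.
Proof.
exists k./2; have := odd_double_half k; case: (odd k) => /= h; [right; rewrite -add1n|left; rewrite ?add0n in h]; by rewrite h.
Qed.

Lemma G1 k : [set g k; g k.+1] \in U.
Proof.
have [t [->|->]] := decomp k.
  rewrite gE1 gE0 /U inE; apply/orP; right; exact: Edge_in.
rewrite -doubleS gE0 gE1 /U inE setUC -addE; apply/orP; left; exact: Edge_in.
Qed.

Lemma om_inj : injective (fun t : 'I_n => om (t * d)).
Proof.
move=> t t' /(congr1 val) /= h; apply/val_inj; exact: cop_cancel h.
Qed.

Lemma G3 v : exists2 k, k < n.*2 & g k = v.
Proof.
case: v => [i|b].
  pose t := invF om_inj i; exists t.*2; first by rewrite ltn_double.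
  by rewrite gE0 /t (f_invF om_inj).
pose i := invF (@ord_addn_inj (j + d)) b.
pose t := invF om_inj i; exists t.*2.+1.
  by rewrite -doubleS leq_double.
by rewrite gE1 /t (f_invF om_inj) /i (f_invF (@ord_addn_inj (j + d))).
Qed.

Lemma G4 k k' : k < n.*2 -> k' < n.*2 -> g k = g k' -> k = k'.
Proof.
have [t [->|->]] := decomp k; have [t' [->|->]] := decomp k';
  rewrite ?gE0 ?gE1 // => lt lt' e.
- have e1 := @inl_inj _ _ _ _ e.
  have tn : t < n by rewrite -ltn_double.
  have tn' : t' < n by rewrite -ltn_double.
  by rewrite (cop_cancel cop tn tn' (congr1 val e1)).
- have e1 := @ord_addn_inj _ _ _ (@inr_inj _ _ _ _ e).
  have tn : t < n by rewrite -ltn_double; exact: ltnW.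
  have tn' : t' < n by rewrite -ltn_double; exact: ltnW.
  by rewrite (cop_cancel cop tn tn' (congr1 val e1)).
Qed.

Lemma G2 : g n.*2 = g 0.
Proof.
rewrite gE0 -[0]/(0.*2) gE0; congr inl; apply/val_inj => /=.
by rewrite mul0n mod0n modnMr.
Qed.

Lemma G5 e : e \in U -> exists2 k, k < n.*2 & e = [set g k; g k.+1].
Proof.
rewrite /U inE => /orP [] ; rewrite MjE => /existsP [i /eqP ->].
  pose t := invF om_inj i.
  have ti : om (t * d) = i by rewrite /t (f_invF om_inj).
  case: t ti => [[|t'] lt] /= ti.
    exists (n.-1).*2.+1.
      by rewrite -doubleS prednK ?npos // ltn_double.
    rewrite -doubleS prednK ?npos // G2 gE1 -[0]/(0.*2) gE0 setUC /Edge -ti.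
    congr [set _; inr _]; apply/val_inj => /=.
    rewrite mul0n mod0n add0n modnDml.
    have -> : (n.-1 * d + (j + d)) = d * n + j.
      by rewrite -{2}(prednK npos) mulnS (mulnC n.-1); lia.
    by rewrite modnMDl.
  exists t'.*2.+1.
    by rewrite -!muln2; lia.
  rewrite -doubleS gE0 gE1 setUC ti -addE ti //.
pose t := invF om_inj i.
have ti : om (t * d) = i by rewrite /t (f_invF om_inj).
exists t.*2; first by rewrite ltn_double.
by rewrite gE0 gE1 ti.
Qed.


Lemma M_sub a : a < 3 -> Mj n a \subset HE n.
Proof.
rewrite /HE; case: a => [|[|[|]]] // _; apply/subsetP => e h; by rewrite !inE h ?orbT.
Qed.

Lemma U_sub : U \subset HE n.
Proof.
rewrite /U subUset !M_sub //; exact: leq_ltn_trans (leq_addr _ _) jd.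
Qed.

Definition s := map g (iota 0 n.*2).

Lemma nth_s k : k < n.*2 -> nth (g 0) s k = g k.
Proof. by move=> lk; rewrite /s (nth_map 0) ?size_iota // nth_iota. Qed.

Lemma s_uniq : uniq s.
Proof.
rewrite map_inj_in_uniq ?iota_uniq // => k k'; rewrite !mem_iota !add0n.
move=> /andP [_ lk] /andP [_ lk']; exact: G4.
Qed.

Lemma gs k : k < n.*2 -> g k \in s.
Proof. by move=> lk; apply: map_f; rewrite mem_iota add0n lk. Qed.

Lemma nextE k : k < n.*2 -> next s (g k) = g k.+1.
Proof.
move=> lk.
have ix : index (g k) s = k.
  by rewrite -{1}(nth_s lk) index_uniq ?s_uniq // /s size_map size_iota.
have n2 : n.*2 = (n.*2).-1.+1 by rewrite prednK // double_gt0 npos.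
rewrite next_nth gs // ix /s n2 /=.
case: (ltnP k (n.*2).-1) => h.
  by rewrite (nth_map 0) ?size_iota // nth_iota.
rewrite nth_default ?size_map ?size_iota //.
have -> : k.+1 = n.*2 by rewrite n2; apply/eqP; rewrite eqSS eqn_leq h -ltnS -n2 lk.
by rewrite G2.
Qed.

Lemma ham : hamilton_cycle (HE n) U.
Proof.
split; first exact: U_sub.
exists s; split.
- exact: s_uniq.
- by move=> v; case: (G3 v) => k lk <-; apply: gs.
- by rewrite size_map size_iota -muln2; lia.
apply/setP => e; apply/idP/imsetP.
  move=> /G5 [k lk ->]; exists (g k); first exact: gs.
  by rewrite nextE.
move=> [x /mapP [k]]; rewrite mem_iota add0n => lk -> ->.
rewrite nextE //; exact: G1.
Qed.

Lemma conn_U : connectedb U.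
Proof.
have c0 k : connect (adj U) (g 0) (g k).
  elim: k => // k ih; apply: connect_trans ih (connect1 _); exact: G1.
apply/forallP => u; apply/forallP => v.
case: (G3 u) => k _ <-; case: (G3 v) => k' _ <-.
apply: connect_trans (c0 k').
rewrite (sym_connect_sym (@adj_sym _ U)); exact: c0.
Qed.

End Cyc.

End Hn.


Lemma card_M n a : #|Mj n a| <= n.
Proof. by apply: leq_trans (leq_imset_card _ _) _; rewrite card_ord. Qed.

Lemma card_HE n : #|HE n| <= 3 * n.
Proof.
rewrite /HE !cardsU.
have := card_M n 0; have := card_M n 1; have := card_M n 2.
set x := #|_ :&: _|; set y := #|_ :&: _|.
lia.
Qed.

Lemma upper n (hn : 3 < n) (hodd : odd n) C : is_conn_code (HE n) C -> #|C| <= 4.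
Proof.
move=> /andP [/forallP sub /forallP pc].
have subC F : F \in C -> F \subset HE n by move=> h; exact: (implyP (sub F) h).
have dist F1 F2 : F1 \in C -> F2 \in C -> F1 != F2 -> n + n <= #|symdiff F1 F2|.+1.
  move=> h1 h2 ne.
  have := implyP (forallP (implyP (pc F1) h1) F2) h2.
  move=> /implyP /(_ ne) /conn_card.
  by rewrite card_sum card_ord.
rewrite leqNgt; apply/negP => c4.
pose sq := enum C.
have ss : size sq = #|C| by rewrite cardE.
pose F k := nth set0 sq k.
have memF k : k < 5 -> F k \in C.
  move=> lk; rewrite -mem_enum; apply: mem_nth; rewrite ss; exact: leq_trans lk c4.
have neq k k' : k < 5 -> k' < 5 -> k != k' -> F k != F k'.
  move=> lk lk' kk; rewrite /F nth_uniq ?enum_uniq // ss; exact: leq_trans _ c4.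
have D k k' : k < 5 -> k' < 5 -> k != k' -> n + n <= #|symdiff (F k) (F k')|.+1.
  by move=> lk lk' kk; apply: dist; [apply: memF|apply: memF|apply: neq].
have := D 0 1 isT isT isT; have := D 0 2 isT isT isT; have := D 1 2 isT isT isT.
have := D 0 3 isT isT isT; have := D 0 4 isT isT isT; have := D 1 3 isT isT isT.
have := D 1 4 isT isT isT; have := D 2 3 isT isT isT; have := D 2 4 isT isT isT.
have := D 3 4 isT isT isT.
have := five_bound (subC _ (memF 0 isT)) (subC _ (memF 1 isT)) (subC _ (memF 2 isT))
  (subC _ (memF 3 isT)) (subC _ (memF 4 isT)).
have := card_HE n.
have := tri_even (subC _ (memF 0 isT)) (subC _ (memF 1 isT)) (subC _ (memF 2 isT)).
set a := #|symdiff (F 0) (F 1)|; set b := #|symdiff (F 0) (F 2)|;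
  set c := #|symdiff (F 1) (F 2)|.
move=> tri.
have := odd_double_half (a + b + c); rewrite (negbTE tri) add0n -muln2.
have n5 : 4 < n.
  by move: hn hodd; rewrite leq_eqVlt => /orP [/eqP <- //|].
move: n5; lia.
Qed.

Lemma neqW n (A B : {set {set HV n}}) x : x \in A -> x \notin B -> A != B.
Proof. by move=> xA xB; apply/eqP => AB; rewrite -AB xA in xB. Qed.

Ltac solve_sub D01 D02 D12 :=
  apply/subsetP; let e := fresh "e" in intro e; rewrite /symdiff !inE;
  by move: (D01 e isT isT isT) (D02 e isT isT isT) (D12 e isT isT isT);
    case: (e \in Mj _ 0); case: (e \in Mj _ 1); case: (e \in Mj _ 2).

Lemma lower n (hn : 3 < n) (hodd : odd n) : 4 <= m_code (HE n).
Proof.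
have cop1 : coprime 1 n := coprime1n n.
have cop2 : coprime 2 n by rewrite coprime_sym coprimen2.
have c01 : connectedb (Mj n 0 :|: Mj n 1) := conn_U hn hodd (j:=0) (d:=1) isT isT cop1.
have c02 : connectedb (Mj n 0 :|: Mj n 2) := conn_U hn hodd (j:=0) (d:=2) isT isT cop2.
have c12 : connectedb (Mj n 1 :|: Mj n 2) := conn_U hn hodd (j:=1) (d:=1) isT isT cop1.
have Dis a b e : a < 3 -> b < 3 -> a != b -> ~~ ((e \in Mj n a) && (e \in Mj n b)).
  move=> a3 b3 ab; apply/negP => /andP [h1 h2].
  by have := M_disj hn a3 b3 h1 h2; move/eqP; rewrite (negbTE ab).
have D01 := Dis 0 1; have D02 := Dis 0 2; have D12 := Dis 1 2.
pose w a := Edge (om hn 0) a.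
have memE a b : a < 3 -> b < 3 -> (w a \in Mj n b) = (a == b).
  move=> a3 b3; apply/idP/eqP => [h|->]; last exact: Edge_in.
  exact: (M_disj hn a3 b3 (Edge_in (om hn 0) a) h).
pose C0 := [set set0; Mj n 0 :|: Mj n 1; Mj n 0 :|: Mj n 2; Mj n 1 :|: Mj n 2].
have code : is_conn_code (HE n) C0.
  apply/andP; split.
    apply/forallP => F; apply/implyP; rewrite !inE.
    by move=> /orP [/orP [/orP [|]|]|] /eqP ->;
      rewrite ?sub0set // subUset !M_sub.
  apply/forallP => F1; apply/implyP => h1; apply/forallP => F2; apply/implyP => h2.
  apply/implyP => ne.
  move: h1 h2 ne; rewrite !inE.
  move=> /orP [/orP [/orP [|]|]|] /eqP ->;
  move=> /orP [/orP [/orP [|]|]|] /eqP ->; rewrite ?eqxx // => _;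
  first [ apply: (conn_sub _ c01); solve_sub D01 D02 D12 | apply: (conn_sub _ c02); solve_sub D01 D02 D12
        | apply: (conn_sub _ c12); solve_sub D01 D02 D12 ].
rewrite /m_code; apply: leq_trans (leq_bigmax_cond (P := is_conn_code (HE n)) (F := fun C => #|C|) C0 code) => /=.
have ne1 : set0 != Mj n 0 :|: Mj n 1.
  by rewrite eq_sym; apply: (neqW (x := w 0)); rewrite !inE ?memE.
have ne2 : set0 != Mj n 0 :|: Mj n 2.
  by rewrite eq_sym; apply: (neqW (x := w 0)); rewrite !inE ?memE.
have ne3 : set0 != Mj n 1 :|: Mj n 2.
  by rewrite eq_sym; apply: (neqW (x := w 1)); rewrite !inE ?memE.
have ne4 : Mj n 0 :|: Mj n 1 != Mj n 0 :|: Mj n 2.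
  by apply: (neqW (x := w 1)); rewrite !inE ?memE.
have ne5 : Mj n 0 :|: Mj n 1 != Mj n 1 :|: Mj n 2.
  by apply: (neqW (x := w 0)); rewrite !inE ?memE.
have ne6 : Mj n 0 :|: Mj n 2 != Mj n 1 :|: Mj n 2.
  by apply: (neqW (x := w 0)); rewrite !inE ?memE.
have -> : #|C0| = #|[:: set0; Mj n 0 :|: Mj n 1; Mj n 0 :|: Mj n 2; Mj n 1 :|: Mj n 2]|.
  by apply: eq_card => X; rewrite !inE !orbA.
have /card_uniqP -> // : uniq [:: set0; Mj n 0 :|: Mj n 1; Mj n 0 :|: Mj n 2; Mj n 1 :|: Mj n 2].
by rewrite /= !inE !negb_or ne1 ne2 ne3 ne4 ne5 ne6.
Qed.


Theorem mainTheorem14 (n : nat) (hn : 3 < n) (hodd : odd n) :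
  [/\ regular 3 (HE n),
      (forall j j' : nat, j < 3 -> j' < 3 -> j != j' ->
         hamilton_cycle (HE n) (Mj n j :|: Mj n j')) &
      m_code (HE n) = 4].
Proof.
have cop1 : coprime 1 n := coprime1n n.
have cop2 : coprime 2 n by rewrite coprime_sym coprimen2.
split.
- exact: regular_HE.
- move=> j j' j3 j'3 jj.
  wlog lt : j j' j3 j'3 jj / j < j'.
    move=> W; case: (ltngtP j j') => h; first exact: W.
      by rewrite setUC; apply: W => //; rewrite eq_sym.
    by rewrite h eqxx in jj.
  case: j j3 lt {jj} => [|[|[|]]] // _; case: j' j'3 => [|[|[|]]] // _ _.
  + exact: (ham hn hodd (j:=0) (d:=1) isT isT cop1).
  + exact: (ham hn hodd (j:=0) (d:=2) isT isT cop2).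
  + exact: (ham hn hodd (j:=1) (d:=1) isT isT cop1).
- apply/eqP; rewrite eqn_leq lower // andbT.
  by apply/bigmax_leqP => C; apply: upper.
Qed.
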